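(* $NPO(3)=6$.
   Context: All graphs are finite, simple and undirected; $A(G)$ denotes the adjacency matrix of $G$. Eigenvalues are counted with multiplicity. For a positive integer $k$, $NPO(k)$ is the smallest integer $n$ such that the adjacency matrix of every graph with at least $n$ vertices has at least $k$ nonpositive eigenvalues. *)

(* Defs.v *)
(* Eigenvalues are taken over algC (algebraically closed, characteristic 0). *)
From HB Require Import structures.
From mathcomp Require Import all_boot all_order all_algebra all_field.
Set Implicit Arguments. Unset Strict Implicit. Unset Printing Implicit Defensive.
Import Order.TTheory GRing.Theory Num.Theory.
Local Open Scope ring_scope.

Definition simple_graph (n : nat) (e : rel 'I_n) : Prop :=
  symmetric e /\ irreflexive e.

Definition adj_mx (n : nat) (e : rel 'I_n) : 'M[algC]_n :=
  \matrix_(i, j) (e i j)%:R.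

Definition eigenvalues_mset (n : nat) (A : 'M[algC]_n) (rs : seq algC) : Prop :=
  char_poly A = \prod_(z <- rs) ('X - z%:P).

Definition at_least_nonpos_eig (k : nat) (n : nat) (A : 'M[algC]_n) : Prop :=
  exists rs : seq algC, eigenvalues_mset A rs /\ (k <= count (fun z : algC => (z <= 0)%R) rs)%N.

Definition NPO_prop (k n : nat) : Prop :=
  forall (m : nat) (e : rel 'I_m), (n <= m)%N -> simple_graph e ->
    at_least_nonpos_eig k (adj_mx e).

Definition NPO_is (k n : nat) : Prop :=
  NPO_prop k n /\ forall n' : nat, NPO_prop k n' -> (n <= n')%N.

(* Main.v *)
Require Import Defs.
From HB Require Import structures.
From mathcomp Require Import all_boot all_order all_algebra all_field.
From mathcomp Require Import ring.
Set Implicit Arguments. Unset Strict Implicit. Unset Printing Implicit Defensive.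
Import Order.TTheory GRing.Theory Num.Theory.

Definition posT : seq (seq nat) :=
  [:: [:: 15; 0; 1; 2; 3; 4];
      [:: 0; 15; 5; 6; 7; 8];
      [:: 1; 5; 15; 9; 10; 11];
      [:: 2; 6; 9; 15; 12; 13];
      [:: 3; 7; 10; 12; 15; 14];
      [:: 4; 8; 11; 13; 14; 15]].

Definition pairs15 : seq (nat * nat) :=
  [:: (0,1); (0,2); (0,3); (0,4); (0,5); (1,2); (1,3); (1,4); (1,5);
      (2,3); (2,4); (2,5); (3,4); (3,5); (4,5)].

Definition adjT (s : seq bool) : seq (seq bool) :=
  map (fun row => map (fun q => nth false s q) row) posT.

Definition lk (T : seq (seq bool)) (i j : nat) : bool := nth false (nth [::] T i) j.

Definition alltup0 : seq (seq nat) :=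
  flatten (map (fun a => flatten (map (fun b => flatten (map (fun c =>
    map (fun d => [:: a; b; c; d]) (iota 0 6)) (iota 0 6))) (iota 0 6))) (iota 0 6)).

Definition tuples : seq (seq nat) := Eval vm_compute in
  [seq t <- alltup0 | uniq t && all (fun x => x < 6) t && (size t == 4)].

Definition Epat (p : nat) : seq (nat * nat) :=
  match p with
  | 0 => [::]
  | 1 => [:: (0,1)]
  | 2 => [:: (0,1); (0,2)]
  | 3 => [:: (0,1); (0,2); (0,3)]
  | 4 => [:: (0,1); (0,2); (0,3); (1,2); (1,3)]
  | 5 => [:: (0,1); (0,2); (0,3); (1,2); (1,3); (2,3)]
  | 6 => [:: (0,1); (0,2); (1,2)]
  | _ => [:: (0,1); (0,2); (1,3); (2,3)]
  end.

Definition cp (p k l : nat) : bool :=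
  has (fun kl : nat * nat => ((kl.1 == k) && (kl.2 == l)) || ((kl.1 == l) && (kl.2 == k))) (Epat p).

Definition cpt : seq (seq (seq bool)) := Eval vm_compute in
  map (fun p => map (fun k => map (fun l => cp p k l) (iota 0 4)) (iota 0 4)) (iota 0 8).

Fixpoint lall (T : Type) (a : T -> bool) (s : seq T) : bool :=
  if s is x :: s' then (if a x then lall a s' else false) else true.
Fixpoint lhas (T : Type) (a : T -> bool) (s : seq T) : bool :=
  if s is x :: s' then (if a x then true else lhas a s') else false.

Definition patOK (T : seq (seq bool)) (p : nat) (t : seq nat) : bool :=
  let C := nth [::] cpt p in
  lall (fun k => lall (fun l => lk T (nth 0 t k) (nth 0 t l) == lk C k l) (iota 0 4)) (iota 0 4).

Definition check (s : seq bool) : bool :=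
  let T := adjT s in
  lhas (fun t => lhas (fun p => patOK T p t) (iota 0 8)) tuples.

Fixpoint amc (n : nat) (acc : seq bool) : bool :=
  if n is n'.+1 then (if amc n' (true :: acc) then amc n' (false :: acc) else false)
  else check acc.

Lemma amc_ok : amc 15 [::].
Proof. vm_compute. reflexivity. Qed.

Lemma tuples_ok : all (fun t => uniq t && all (fun x => x < 6) t && (size t == 4)) tuples.
Proof. by vm_compute. Qed.

Lemma lallE (T : Type) (a : T -> bool) s : lall a s = all a s.
Proof. by elim: s => //= x s ->; case: (a x). Qed.

Lemma lhasE (T : Type) (a : T -> bool) s : lhas a s = has a s.
Proof. by elim: s => //= x s ->; case: (a x). Qed.

Lemma amc_spec n acc : amc n acc -> forall s, size s = n -> check (catrev s acc).
Proof.
elim: n acc => [|n IH] acc.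
  move=> H [|b s] Hs; first exact: H.
  discriminate Hs.
rewrite [amc _ _]/=.
case H1: (amc n (true :: acc)); last by [].
move=> H2 [|b s] Hs; first discriminate Hs.
case: Hs => Hs.
case: b; [exact: IH H1 _ Hs | exact: IH H2 _ Hs].
Qed.

Lemma check_all s : size s = 15 -> check s.
Proof.
move=> Hs; have := amc_spec amc_ok (s := rev s).
rewrite size_rev Hs => /(_ erefl).
by rewrite catrevE revK cats0.
Qed.

Lemma adjT_ok (E : nat -> nat -> bool) :
  (forall i j, E i j = E j i) -> (forall i, E i i = false) ->
  forall i j, i < 6 -> j < 6 ->
  lk (adjT (map (fun ij => E ij.1 ij.2) pairs15)) i j = E i j.
Proof.
move=> Es Ei i j Hi Hj.
do 6?[case: i Hi => [|i] Hi //]; do 6?[case: j Hj => [|j] Hj //];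
  by rewrite /= ?Ei // Es.
Qed.

Lemma cpt_ok p k l : p < 8 -> k < 4 -> l < 4 -> lk (nth [::] cpt p) k l = cp p k l.
Proof.
move=> Hp Hk Hl.
do 8?[case: p Hp => [|p] Hp //]; do 4?[case: k Hk => [|k] Hk //];
  do 4?[case: l Hl => [|l] Hl //].
Qed.

Lemma comb (E : nat -> nat -> bool) :
  (forall i j, E i j = E j i) -> (forall i, E i i = false) ->
  exists t p, [/\ t \in tuples, p < 8 &
    forall k l, k < 4 -> l < 4 -> E (nth 0 t k) (nth 0 t l) = cp p k l].
Proof.
move=> Es Ei.
set s := map (fun ij => E ij.1 ij.2) pairs15.
have := check_all (s := s) (erefl _).
rewrite /check lhasE => /hasP [t tT]; rewrite lhasE => /hasP [p].
rewrite mem_iota /= => Hp; rewrite /patOK; cbv zeta; rewrite lallE => /allP Hall.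
exists t, p; split => // k l Hk Hl.
have Hk' : k \in iota 0 4 by rewrite mem_iota.
have Hl' : l \in iota 0 4 by rewrite mem_iota.
have := Hall k Hk'; cbv beta; rewrite lallE => /allP /(_ l Hl') /eqP.
have := allP tuples_ok t tT.
move=> /andP [/andP [_ /allP Ht6] /eqP Ht4].
rewrite adjT_ok //; last first.
  - by apply: Ht6; rewrite mem_nth // Ht4.
  - by apply: Ht6; rewrite mem_nth // Ht4.
by move=> ->; rewrite cpt_ok.
Qed.


Local Open Scope ring_scope.
Local Open Scope sesquilinear_scope.

Lemma char_poly_conj n (P D : 'M[algC]_n) : P \in unitmx ->
  char_poly (invmx P *m D *m P) = char_poly D.
Proof.
move=> Pu.
rewrite /char_poly /char_poly_mx !map_mxM.
set Q := map_mx polyC (invmx P).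
set P' := map_mx polyC P.
have QP : Q *m P' = 1%:M by rewrite -map_mxM mulVmx // map_mx1.
have -> : ('X%:M : 'M[{poly algC}]_n) - Q *m map_mx polyC D *m P' =
    Q *m ('X%:M - map_mx polyC D) *m P'.
  by rewrite mulmxBr mulmxBl scalar_mxC -[_ *m Q *m P']mulmxA QP mulmx1.
by rewrite !det_mulmx mulrC mulrA -det_mulmx /P' /Q -map_mxM mulmxV // map_mx1 det1 mul1r.
Qed.

Lemma quad_diag n (u d : 'rV[algC]_n) :
  (u *m diag_mx d *m u^t*) 0 0 = \sum_i d 0 i * (u 0 i * (u 0 i)^*).
Proof.
rewrite mul_mx_diag !mxE; apply: eq_bigr => i _; rewrite !mxE.
by rewrite mulrAC mulrC.
Qed.

Lemma key m (A : 'M[algC]_m) (V : 'M[algC]_(3,m)) (g : 'rV[algC]_3) :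
  A \is hermsymmx -> (forall c : 'rV_3, c *m V = 0 -> c = 0) ->
  V *m A *m V^t* = diag_mx g -> (forall i, g 0 i <= 0) -> at_least_nonpos_eig 3 A.
Proof.
move=> Ah Vinj HG Hg.
set P := spectralmx A; set d := spectral_diag A.
have PU : P \is unitarymx := spectral_unitarymx A.
have Pu := unitarymx_unit PU.
have AE : A = invmx P *m diag_mx d *m P.
  exact/orthomx_spectralP/hermitian_normalmx.
have dreal : forall i, d 0 i \is Num.real.
  by move=> i; apply: (mxOverP (hermitian_spectral_diag_real Ah)).
exists [seq d 0 i | i <- enum 'I_m]; split.
  rewrite /eigenvalues_mset AE char_poly_conj // char_poly_trig; last first.
    exact/is_diag_mx_is_trig/diag_mx_is_diag.
  rewrite big_map big_enum /=; apply: eq_bigr => i _; by rewrite mxE eqxx mulr1n.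
rewrite count_map.
set S := preim _ _.
have -> : count S (enum 'I_m) = #|S|.
  rewrite cardE /enum_mem size_filter; congr count.
  by rewrite (@eq_filter _ _ predT) ?filter_predT.
rewrite leqNgt; apply/negP => Hk.
set M := \matrix_(i < 3, j < #|S|) (V *m P^t*) i (enum_val j).
have kM : kermx M != 0.
  rewrite -mxrank_eq0 mxrank_ker subn_eq0 -ltnNge.
  exact: leq_ltn_trans (rank_leq_col M) Hk.
have [v /sub_kermxP vM vnz] := rowV0Pn kM.
set x := v *m V.
have xnz : x != 0 by apply: contra vnz => /eqP /Vinj ->.
set y := x *m P^t*.
have yS : forall i, d 0 i <= 0 -> y 0 i = 0.
  move=> i iS.
  have iS' : i \in S by [].
  move/rowP: (vM) => /(_ (enum_rank_in iS' i)).
  rewrite !mxE => H; apply: etrans H.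
  transitivity ((v *m V *m P^t*) 0 i); first by rewrite mxE.
  rewrite -mulmxA mxE; apply: eq_bigr => l _; by rewrite /M [in RHS]mxE enum_rankK_in // mxE.
have PtP : P^t* *m P = 1%:M by apply: mulmx1C; exact/unitarymxP.
have ynz : y != 0.
  apply: contra xnz => /eqP y0; apply/eqP.
  by rewrite -[x]mulmx1 -PtP mulmxA -/y y0 mul0mx.
have q1 : (x *m A *m x^t*) 0 0 = \sum_i g 0 i * (v 0 i * (v 0 i)^*).
  rewrite -quad_diag -HG /x trmx_mul map_mxM !mulmxA //.
have q2 : (x *m A *m x^t*) 0 0 = \sum_i d 0 i * (y 0 i * (y 0 i)^*).
  rewrite -quad_diag /y AE invmx_unitary //; congr (_ 0 0).
  by rewrite [in RHS]trmx_mul [in RHS]map_mxM trmxCK !mulmxA.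
have qle : (x *m A *m x^t*) 0 0 <= 0.
  rewrite q1; apply: sumr_le0 => i _.
  by apply: mulr_le0_ge0; [exact: Hg | exact: mul_conjC_ge0].
have [i0 yi0] : exists i0, y 0 i0 != 0.
  apply/existsP; apply: contraR ynz; rewrite negb_exists => /forallP H.
  apply/eqP/rowP => i; rewrite [RHS]mxE; have := H i; by rewrite negbK => /eqP.
have di0 : 0 < d 0 i0.
  rewrite real_ltNge ?real0 ?dreal //; apply: contra yi0 => H.
  by rewrite yS.
have : 0 < (x *m A *m x^t*) 0 0.
  rewrite q2 (bigD1 i0) //=.
  apply: ltr_wpDr; last by apply: mulr_gt0 => //; rewrite mul_conjC_gt0.
  apply: sumr_ge0 => i _.
  have [H|H] := boolP (d 0 i <= 0).
    by rewrite yS // mul0r mulr0.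
  apply: mulr_ge0; last exact: mul_conjC_ge0.
  by apply: ltW; rewrite real_ltNge ?real0 ?dreal.
by move=> H; have := lt_le_trans H qle; rewrite ltxx.
Qed.

Lemma sum_deltal n (a : 'I_n) (F : 'I_n -> algC) :
  \sum_j (j == a)%:R * F j = F a.
Proof.
rewrite (bigD1 a) //= eqxx mul1r big1 ?addr0 // => j /negPf ->; by rewrite mul0r.
Qed.

Lemma sum_deltar n (a : 'I_n) (F : 'I_n -> algC) :
  \sum_j F j * (j == a)%:R = F a.
Proof.
rewrite (bigD1 a) //= eqxx mulr1 big1 ?addr0 // => j /negPf ->; by rewrite mulr0.
Qed.

Lemma adj_herm m (e : rel 'I_m) : simple_graph e -> adj_mx e \is hermsymmx.
Proof.
move=> [esym _]; rewrite is_hermitianmxE expr0 scale1r; apply/eqP/matrixP => i j.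
by rewrite !mxE conjC_nat esym.
Qed.

Lemma cert m (e : rel 'I_m) (f : 'I_4 -> 'I_m) (W : 'M[algC]_(3,4))
  (R : 'M[algC]_(4,3)) (a : algC) (g : 'rV[algC]_3) (H : 'M[algC]_4) :
  simple_graph e -> injective f ->
  (forall k l, (e (f k) (f l))%:R = H k l) -> a != 0 ->
  W *m R = a%:M -> W *m H *m W^t* = diag_mx g -> (forall i, g 0 i <= 0) ->
  at_least_nonpos_eig 3 (adj_mx e).
Proof.
move=> sg finj HH anz WR HG Hg.
set E : 'M[algC]_(4, m) := \matrix_(k, j) (j == f k)%:R.
have EA : forall p (B : 'M[algC]_(m, p)), E *m B = \matrix_(k, j) B (f k) j.
  move=> p B; apply/matrixP => k j; rewrite !mxE.
  rewrite -(sum_deltal (f k) (fun i => B i j)); apply: eq_bigr => i _; by rewrite mxE.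
have EtE : E *m E^t* = 1%:M.
  rewrite EA; apply/matrixP => k l; rewrite !mxE conjC_nat (inj_eq finj) eq_sym.
  by [].
apply: (@key _ _ (W *m E) g (adj_herm sg)) => //.
- move=> c cWE.
  have cW : c *m W = 0.
    by rewrite -[c *m W]mulmx1 -EtE mulmxA -(mulmxA c) cWE mul0mx.
  have : a *: c = 0 by rewrite -mul_mx_scalar -WR mulmxA cW mul0mx.
  by move/eqP; rewrite scaler_eq0 (negPf anz) => /eqP.
- rewrite -HG trmx_mul map_mxM !mulmxA -(mulmxA W E) EA.
  congr (_ *m _); rewrite -mulmxA; congr (_ *m _).
  apply/matrixP => k l; rewrite !mxE -HH.
  rewrite -(sum_deltar (f l) (fun j => ((e (f k) j)%:R : algC))).
  apply: eq_bigr => j _; by rewrite !mxE rmorph_nat.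
Qed.

Definition mkM r c (l : seq (seq int)) : 'M[algC]_(r, c) :=
  \matrix_(i, j) (nth 0 (nth [::] l i) j)%:~R.

Definition Hp (p : nat) : 'M[algC]_4 := \matrix_(k, l) (cp p k l)%:R.

Definition Wp (p : nat) : seq (seq int) :=
  match p with
  | 0 => [:: [:: 1; 0; 0; 0]; [:: 0; 1; 0; 0]; [:: 0; 0; 1; 0]]
  | 1 => [:: [:: 1; 0; 0; 0]; [:: 0; 0; 1; 0]; [:: 0; 0; 0; 1]]
  | 3 => [:: [:: 1; 0; 0; 0]; [:: 0; 1; 0; -1]; [:: 0; 1; -1; 0]]
  | 4 => [:: [:: 1; 0; 0; 0]; [:: 0; 1; 0; -1]; [:: 0; 0; 1; -1]]
  | 5 => [:: [:: 1; 0; 0; 0]; [:: 0; 1; 0; -1]; [:: 0; 1; -2; 1]]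
  | _ => [:: [:: 1; 0; 0; 0]; [:: 0; 0; 0; 1]; [:: 0; 1; -1; 0]]
  end.

Definition Rp (p : nat) : seq (seq int) :=
  match p with
  | 0 => [:: [:: 1; 0; 0]; [:: 0; 1; 0]; [:: 0; 0; 1]; [:: 0; 0; 0]]
  | 1 => [:: [:: 1; 0; 0]; [:: 0; 0; 0]; [:: 0; 1; 0]; [:: 0; 0; 1]]
  | 3 => [:: [:: 2; 0; 0]; [:: 0; 0; 0]; [:: 0; 0; -2]; [:: 0; -2; 0]]
  | 4 => [:: [:: 2; 0; 0]; [:: 0; 2; 0]; [:: 0; 0; 2]; [:: 0; 0; 0]]
  | 5 => [:: [:: 2; 0; 0]; [:: 0; 2; 0]; [:: 0; 1; -1]; [:: 0; 0; 0]]
  | _ => [:: [:: 1; 0; 0]; [:: 0; 0; 1]; [:: 0; 0; 0]; [:: 0; 1; 0]]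
  end.

Definition ap (p : nat) : int := if p \in [:: 3; 4; 5] then 2 else 1.

Definition gp (p : nat) : seq int :=
  match p with
  | 4 => [:: 0; -2; 0]
  | 5 => [:: 0; -2; -6]
  | 6 => [:: 0; 0; -2]
  | _ => [:: 0; 0; 0]
  end.

Lemma checkR p : (p < 8)%N -> mkM 3 4 (Wp p) *m mkM 4 3 (Rp p) = (ap p)%:~R%:M.
Proof.
move=> Hp; do 8?[case: p Hp => [|p] Hp //];
apply/matrixP => i j; rewrite !mxE !big_ord_recr big_ord0 /=;
case: i => [[|[|[|i]]] Hi] //; case: j => [[|[|[|j]]] Hj] //; rewrite /= !mxE /=; ring.
Qed.

Lemma checkG p : (p < 8)%N ->
  mkM 3 4 (Wp p) *m Hp p *m (mkM 3 4 (Wp p))^t* = diag_mx (mkM 1 3 [:: gp p]).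
Proof.
move=> Hp; do 8?[case: p Hp => [|p] Hp //];
apply/matrixP => i j; rewrite !mxE !big_ord_recr big_ord0 /= !mxE !big_ord_recr !big_ord0 /=;
case: i => [[|[|[|i]]] Hi] //; case: j => [[|[|[|j]]] Hj] //; rewrite /= !mxE /= ?rmorph_int.
all: ring.
Qed.

Lemma pat_ok m (e : rel 'I_m) (f : 'I_4 -> 'I_m) p : (p < 8)%N ->
  simple_graph e -> injective f ->
  (forall k l : 'I_4, e (f k) (f l) = cp p k l) -> at_least_nonpos_eig 3 (adj_mx e).
Proof.
move=> p8 sg finj HE.
have HC := (@cert m e f (mkM 3 4 (Wp p)) (mkM 4 3 (Rp p)) (ap p)%:~R (mkM 1 3 [:: gp p]) (Hp p)).
apply: HC.
- exact: sg.
- exact: finj.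
- by move=> k l; rewrite mxE HE.
- by rewrite intr_eq0 /ap; case: (p \in _).
- exact: checkR.
- exact: checkG.
- move=> i; rewrite mxE lerz0.
  clear HE; by do 8?[case: p p8 => [|p] p8 //]; case: i => [[|[|[|i]]] Hi] //=.
Qed.

Definition c5 : rel 'I_5 := fun i j => ((val j == (val i + 1) %% 5)%N || (val i == (val j + 1) %% 5)%N).

Lemma c5_simple : simple_graph c5.
Proof.
split.
  by move=> i j; rewrite /c5 orbC.
by move=> [[|[|[|[|[|i]]]]] Hi].
Qed.

Lemma c5_cube : adj_mx c5 *m adj_mx c5 *m adj_mx c5 =
  adj_mx c5 *m adj_mx c5 + 3%:R *: adj_mx c5 - 2%:R%:M.
Proof.
apply/matrixP => i j.
rewrite !mxE !big_ord_recr big_ord0 /= !mxE !big_ord_recr !big_ord0 /=.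
case: i => [[|[|[|[|[|i]]]]] Hi] //; case: j => [[|[|[|[|[|j]]]]] Hj] //;
  rewrite /= !mxE /=; ring.
Qed.

Lemma c5_tr : \tr (adj_mx c5) = 0.
Proof.
rewrite /mxtrace big1 // => i _; rewrite mxE.
by case: i => [[|[|[|[|[|i]]]]] Hi].
Qed.

Lemma root_le0 (z : algC) : z ^+ 2 + z - 1 = 0 -> z <= 0 -> 2%:R * z + 3%:R < 0.
Proof.
move=> hz zle.
have h1 : (- (2%:R * z) + 1) * (- (2%:R * z) - 3%:R) = 1.
  have -> : (- (2%:R * z) + 1) * (- (2%:R * z) - 3%:R) = 4%:R * (z ^+ 2 + z - 1) + 1 by ring.
  by rewrite hz mulr0 add0r.
have h2 : 0 < - (2%:R * z) + 1.
  apply: ltr_wpDl; last exact: ltr01.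
  by rewrite oppr_ge0 pmulr_rle0 // ltr0n.
have : 0 < - (2%:R * z) - 3%:R by rewrite -(pmulr_rgt0 _ h2) h1 ltr01.
by rewrite -opprD oppr_gt0.
Qed.

Lemma root_real (z : algC) : z ^+ 2 + z - 1 = 0 -> z \is Num.real.
Proof.
move=> hz; apply/CrealP.
have hw : z^* ^+ 2 + z^* - 1 = 0.
  by have := congr1 (fun x => x^*) hz; rewrite /= !rmorphB !rmorphD !rmorphXn rmorph1 rmorph0.
have : (z - z^*) * (z + z^* + 1) = 0.
  have -> : (z - z^*) * (z + z^* + 1) = (z ^+ 2 + z - 1) - (z^* ^+ 2 + z^* - 1) by ring.
  by rewrite hz hw subrr.
move/eqP; rewrite mulf_eq0 => /orP [/eqP H|/eqP H].
  by apply/esym/eqP; rewrite -subr_eq0 H.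
have : z * z^* = -1.
  have -> : z^* = (z + z^* + 1) - 1 - z by ring.
  rewrite H.
  have -> : z * (0 - 1 - z) = - (z ^+ 2 + z - 1) - 1 by ring.
  by rewrite hz oppr0 add0r.
move=> H2; have := mul_conjC_ge0 z; rewrite H2 oppr_ge0 ler10.
by [].
Qed.

Lemma sum_count (rs : seq algC) (P : pred algC) :
  \sum_(z <- rs) (P z)%:R = (count P rs)%:R :> algC.
Proof. by elim: rs => [|x rs IH]; rewrite ?big_nil ?big_cons ?IH ?natrD. Qed.

Lemma c5_bad : ~ at_least_nonpos_eig 3 (adj_mx c5).
Proof.
move=> [rs [Hch Hcnt]].
rewrite /eigenvalues_mset in Hch; set A := adj_mx c5 in Hch.
have Hsz : size rs = 5.
  by have := congr1 (fun p : {poly algC} => size p) Hch; rewrite size_char_poly size_prod_XsubC => [[]].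
have Hsum : \sum_(z <- rs) z = 0.
  have := @coefPn_prod_XsubC _ rs; rewrite Hsz => /(_ isT).
  rewrite -Hch char_poly_trace // c5_tr => /eqP; rewrite eqr_opp => /eqP <-.
  by [].
have Hroot : forall z, z \in rs -> (z - 2%:R) * (z ^+ 2 + z - 1) = 0.
  move=> z zin.
  have : eigenvalue A z by rewrite eigenvalue_root_char Hch root_prod_XsubC.
  case/eigenvalueP => v vA vnz.
  have E2 : v *m A *m A = z ^+ 2 *: v by rewrite vA -scalemxAl vA scalerA.
  have E3 : v *m A *m A *m A = z ^+ 3 *: v.
    by rewrite E2 -scalemxAl vA scalerA -exprSr.
  have := congr1 (mulmx v) c5_cube.
  rewrite -/A !mulmxA E3 mulmxBr mulmxDr mulmxA E2 -scalemxAr vA mul_mx_scalar.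
  move/eqP; rewrite -subr_eq0.
  have -> : z ^+ 3 *: v - (z ^+ 2 *: v + 3%:R *: (z *: v) - 2%:R *: v) =
            ((z - 2%:R) * (z ^+ 2 + z - 1)) *: v.
    by apply/rowP => i; rewrite !mxE; ring.
  by rewrite scaler_eq0 (negPf vnz) orbF => /eqP.
have Hb : forall z, z \in rs -> 6%:R * z <= 12%:R - 21%:R * ((z <= 0)%R)%:R.
  move=> z zin; have := Hroot z zin; move/eqP; rewrite mulf_eq0 subr_eq0.
  case: (boolP (z <= 0)) => zle /=.
    case/orP => [/eqP z2|/eqP hz].
      by move: zle; rewrite z2 lern0.
    have := root_le0 hz zle.
    rewrite mulr1 => H; rewrite -subr_ge0.
    have -> : 12%:R - 21%:R - 6%:R * z = - 3%:R * (2%:R * z + 3%:R) by ring.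
    by rewrite mulNr oppr_ge0 pmulr_rle0 ?ltr0n // ltW.
  rewrite mulr0 subr0.
  case/orP => [/eqP ->|/eqP hz]; first by rewrite -natrM ler_nat.
  have zr := root_real hz.
  have : 0 <= 1 - z.
    have := mul_conjC_ge0 z; move/CrealP: (zr) => ->.
    have -> : z * z = 1 - z + (z ^+ 2 + z - 1) by ring.
    by rewrite hz addr0.
  rewrite subr_ge0 => z1.
  rewrite -subr_ge0.
  have -> : 12%:R - 6%:R * z = 6%:R + 6%:R * (1 - z) by ring.
  by apply: addr_ge0; [rewrite ler0n | apply: mulr_ge0; rewrite ?ler0n ?subr_ge0].
have : \sum_(z <- rs) 6%:R * z <= \sum_(z <- rs) (12%:R - 21%:R * ((z <= 0)%R)%:R :> algC).
  by rewrite big_seq_cond [X in _ <= X]big_seq_cond; apply: ler_sum => z /andP [zin _]; apply: Hb.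
rewrite -mulr_sumr Hsum mulr0 sumrB -mulr_sumr sum_count big_const_seq.
rewrite count_predT Hsz /= addr0 -!natrD -natrM subr_ge0 ler_nat.
move: Hcnt; set N := count _ rs => HN HN'.
have : (21 * 3 <= 21 * N)%N by rewrite leq_mul2l.
by move=> H; have := leq_trans H HN'.
Qed.

Theorem mainTheorem6 : NPO_is 3 6.
Proof.
split.
  move=> m e Hm sg.
  pose pick6 (n : nat) : 'I_m := Ordinal (leq_trans (ltn_pmod n (isT : (0 < 6)%N)) Hm).
  have [esym eirr] := sg.
  have [t [p [tT p8 Ht]]] := @comb (fun i j => e (pick6 i) (pick6 j))
     (fun i j => esym _ _) (fun i => eirr _).
  have := allP tuples_ok t tT => /andP [/andP [tu /allP Ht6] /eqP Ht4].
  pose f (k : 'I_4) : 'I_m := pick6 (nth 0 t k).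
  have finj : injective f.
    move=> k l /(congr1 val) /=.
    rewrite !modn_small; last first.
    - by apply: Ht6; rewrite mem_nth // Ht4.
    - by apply: Ht6; rewrite mem_nth // Ht4.
    move/eqP; rewrite nth_uniq ?Ht4 // => /eqP; exact: val_inj.
  apply: (@pat_ok m e f p p8 sg finj) => k l.
  exact: Ht.
move=> n' Hn'; rewrite leqNgt; apply/negP => Hlt.
exact: c5_bad (Hn' 5 c5 Hlt c5_simple).
Qed.
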